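(* For every integer $k\ge2$, with $d=k(k-1)/2$, there exist linear operators $A_1,\ldots,A_k\colon\mathbb{R}^k\to\mathbb{R}^d$ such that for every $x\in\mathbb{R}^k$ the vectors $A_1x,\ldots,A_kx$ are linearly dependent, while for every nonzero $x=(x_1,\ldots,x_k)\in\mathbb{R}^k$ the operator $\sum_{i=1}^kx_iA_i$ has rank exactly $k-1$. In particular, no nontrivial linear combination of $A_1,\ldots,A_k$ has rank less than $k-1$. *)

(* Defs.v *)
From HB Require Import structures.
From mathcomp Require Import all_boot all_order all_algebra.
Set Implicit Arguments. Unset Strict Implicit. Unset Printing Implicit Defensive.
Import Order.TTheory GRing.Theory Num.Theory.
Local Open Scope ring_scope.

Definition lin_dependent (R : fieldType) (V : lmodType R) (n : nat)
  (v : 'I_n -> V) : Prop :=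
  exists c : 'I_n -> R, (exists i, c i != 0) /\ \sum_(i < n) c i *: v i = 0.

(* Main.v *)
From HB Require Import structures.
From mathcomp Require Import all_boot all_order all_algebra.
From mathcomp Require Import ring.
Import Order.TTheory GRing.Theory Num.Theory.
From mathcomp Require Import zify.
Require Import Defs.
Local Open Scope ring_scope.

Definition eps (R : realFieldType) {k} (l c : 'I_k) : R := ((l < c)%N)%:R - ((c < l)%N)%:R.
Definition coef (R : realFieldType) {k} (S : {set 'I_k}) (l c : 'I_k) : R :=
  ((l \in S) && (c \in S))%:R * eps R l c.

Lemma eps_anti (R : realFieldType) k (l c : 'I_k) : eps R c l = - eps R l c.
Proof. by rewrite /eps opprB. Qed.

Lemma eps_nn (R : realFieldType) k (l : 'I_k) : eps R l l = 0.
Proof. by rewrite /eps ltnn subrr. Qed.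

Lemma eps_neq0 R k (l c : 'I_k) : l != c -> eps R l c != 0.
Proof.
rewrite /eps neq_ltn => /orP[] h.
  by rewrite h ltnNge ltnW // subr0 oner_eq0.
by rewrite h ltnNge ltnW // sub0r oppr_eq0 oner_eq0.
Qed.

Lemma coef_anti (R : realFieldType) k S (l c : 'I_k) : coef R S c l = - coef R S l c.
Proof. by rewrite /coef andbC eps_anti mulrN. Qed.

Lemma B_self (R : realFieldType) k S (x : 'I_k -> R) :
  \sum_l \sum_c x l * x c * coef R S l c = 0.
Proof.
set s := (X in X = 0).
have : s = - s.
  rewrite {1}/s exchange_big /= -sumrN; apply: eq_bigr => l _.
  rewrite -sumrN; apply: eq_bigr => c _.
  by rewrite coef_anti mulrN (mulrC (x c)).
move=> h; have : s *+ 2 == 0 by rewrite mulr2n {1}h addNr.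
by rewrite mulrn_eq0 /= => /eqP.
Qed.

Lemma B_pair (R : realFieldType) k (i j : 'I_k) (x u : 'I_k -> R) : i != j ->
  \sum_l \sum_c x l * u c * coef R [set i; j] l c = eps R i j * (x i * u j - x j * u i).
Proof.
move=> ij.
have E : forall F : 'I_k -> R, (forall l, l \notin [set i; j] -> F l = 0) ->
   \sum_l F l = F i + F j.
  move=> F hF; rewrite (bigID (mem [set i; j])) /=.
  rewrite [X in _ + X]big1 ?addr0; last by move=> l h; apply: hF.
  have -> : \sum_(l | l \in [set i; j]) F l = \sum_(l in i |: [set j]) F l by [].
  by rewrite big_setU1 ?in_set1 //= big_set1.
have Z : forall l c, l \notin [set i; j] -> coef R [set i; j] l c = 0.
  by move=> l c h; rewrite /coef (negbTE h) mul0r.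
have Z' : forall l c, c \notin [set i; j] -> coef R [set i; j] l c = 0.
  by move=> l c h; rewrite /coef (negbTE h) andbF mul0r.
rewrite E; last first.
  by move=> l h; apply: big1 => c _; rewrite Z // mulr0.
rewrite !E; try by move=> c h; rewrite Z' // mulr0.
rewrite /coef !inE !eqxx /= ?orbT !mul1r !eps_nn eps_anti !mulr0 add0r addr0.
ring.
Qed.

Lemma Nmx_gen (R : realFieldType) d k (S : 'I_d -> {set 'I_k}) (x u : 'cV[R]_k) r :
  ((\sum_i x i 0 *: (\matrix_(r, c) coef R (S r) i c : 'M_(d,k))) *m u) r 0 =
  \sum_l \sum_c x l 0 * u c 0 * coef R (S r) l c.
Proof.
rewrite mxE [RHS]exchange_big /=; apply: eq_bigr => c _.
rewrite summxE mulr_suml; apply: eq_bigr => l _.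
by rewrite !mxE mulrAC.
Qed.

Theorem mainTheorem8 (R : realFieldType) (k : nat) (hk : (2 <= k)%N) :
  exists A : 'I_k -> 'M[R]_((k * (k - 1)) %/ 2, k),
    (forall x : 'cV[R]_k, lin_dependent (fun i : 'I_k => A i *m x)) /\
    (forall x : 'cV[R]_k, x != 0 ->
       \rank (\sum_(i < k) x i 0 *: A i)%R = k.-1).
Proof.
set d := ((k * (k - 1)) %/ 2)%N.
pose D := [set S : {set 'I_k} | #|S| == 2].
have hD : #|D| = d by rewrite /d card_draws card_ord bin2 divn2 subn1.
pose Sr (r : 'I_d) : {set 'I_k} := enum_val (cast_ord (esym hD) r).
pose A := fun l : 'I_k => \matrix_(r, c) coef R (Sr r) l c : 'M[R]_(d, k).
exists A.
have Nmx : forall (x u : 'cV[R]_k) r,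
  ((\sum_i x i 0 *: A i) *m u) r 0 = \sum_l \sum_c x l 0 * u c 0 * coef R (Sr r) l c.
  by move=> x u r; apply: Nmx_gen.
have nz : forall x : 'cV[R]_k, x != 0 -> exists i, x i 0 != 0.
  move=> x xn0; apply/existsP; apply: contraR xn0 => /existsPn h.
  by apply/eqP/matrixP => i j; rewrite ord1 mxE; exact/eqP/negPn/h.
have Nx0 : forall x : 'cV[R]_k, (\sum_i x i 0 *: A i) *m x = 0.
  by move=> x; apply/matrixP => r j; rewrite ord1 Nmx B_self mxE.
split.
  move=> x; case: (eqVneq x 0) => [-> | xn0].
    have k0 : (0 < k)%N by apply: leq_trans hk.
    exists (fun _ => 1); split; first by exists (Ordinal k0); rewrite oner_neq0.
    by apply: big1 => i _; rewrite mulmx0 scaler0.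
  exists (fun i => x i 0); split; first exact: nz.
  by apply: etrans (Nx0 x); rewrite mulmx_suml; apply: eq_bigr => i _; rewrite scalemxAl.
move=> x xn0; have [i0 hi] := nz x xn0.
set N := \sum_i x i 0 *: A i.
have s1 : (x^T <= kermx N^T)%MS.
  by apply/sub_kermxP; rewrite -trmx_mul Nx0 trmx0.
have s2 : (kermx N^T <= x^T)%MS.
  apply/row_subP => r; set u := row r (kermx N^T).
  have hu : u *m N^T = 0 by apply/sub_kermxP; exact: row_sub.
  clearbody u.
  have hu' : N *m u^T = 0 by rewrite -[N]trmxK -trmx_mul hu trmx0.
  have h : forall j, x i0 0 * u 0 j = x j 0 * u 0 i0.
    move=> j; case: (eqVneq j i0) => [-> | ji]; first by rewrite mulrC.
    have SD : [set i0; j] \in D by rewrite inE cards2 (eq_sym i0) ji.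
    pose r' := cast_ord hD (enum_rank_in SD [set i0; j]).
    have Sr' : Sr r' = [set i0; j] by rewrite /Sr cast_ordK enum_rankK_in.
    have := Nmx x u^T r'; rewrite -/N hu' Sr' mxE.
    rewrite (@B_pair R k i0 j (fun l => x l 0) (fun c => u^T c 0)) 1?eq_sym // !mxE => /esym/eqP.
    rewrite mulf_eq0 (negbTE (@eps_neq0 R k i0 j _)) 1?eq_sym //= eq_sym subr_eq0.
    by move/eqP.
  apply/sub_rVP; exists (u 0 i0 / x i0 0); apply/rowP => j.
  rewrite !mxE; apply: (mulfI hi); rewrite h; field; exact: hi.
have r1 : \rank (kermx N^T) = 1%N.
  apply/eqP; rewrite eqn_leq; apply/andP; split.
    by apply: leq_trans (mxrankS s2) (rank_leq_row _).
  apply: leq_trans (mxrankS s1); rewrite lt0n mxrank_eq0.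
  by apply: contra xn0 => /eqP/(congr1 trmx); rewrite trmxK trmx0 => ->.
move: r1; rewrite mxrank_ker mxrank_tr.
have := rank_leq_col N; lia.
Qed.
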